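(* For every integer $k\ge2$, $\displaystyle\lim_{n\to\infty}\chi''_c(G_{k,n})=k+1$.
   Context: A half-edge has exactly one end vertex. Let $H_k$ be obtained from $K_{k,k}$ by deleting one vertex but keeping its $k$ incident edges as half-edges, and let $H'_k$ be obtained from $H_k$ by deleting $k-2$ of its half-edges. For $n\ge1$ let $B_1,\ldots,B_n$ be copies of $H'_k$ with half-edges $f_i,f'_i$ in $B_i$, and let $B_0$ be a single vertex $u$ with two half-edges $f_0,f'_{n+1}$. $G_{k,n}$ is obtained from the disjoint union of $B_0,\ldots,B_n$ by joining $f_i$ and $f'_{i+1}$ into an edge for each $0\le i\le n$. For integers $p\ge q\ge1$, a $(p,q)$-total colouring of a graph assigns colours in $\{0,\ldots,p-1\}$ to vertices and edges such that $q\le|c(a)-c(b)|\le p-q$ whenever $a,b$ are adjacent vertices, edges sharing an end, or an incident vertex–edge pair; $\chi''_c(G)=\inf\{p/q\mid G \text{ has a } (p,q)\text{-total colouring}\}$. *)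

(* Defs.v *)
From HB Require Import structures.
From mathcomp Require Import all_boot all_order all_algebra.
From mathcomp Require Import all_classical all_reals all_analysis.
Set Implicit Arguments. Unset Strict Implicit. Unset Printing Implicit Defensive.
Import Order.TTheory GRing.Theory Num.Theory.

(* The colour of the edge
   xy is [ce x y] (required to be symmetric, so it is really a function of
   the unordered edge {x,y}). *)

Definition cdist (a b : nat) : nat := (a - b) + (b - a).

Definition pq_ok (p q a b : nat) : Prop := q <= cdist a b /\ cdist a b <= p - q.

Definition is_total_colouring (T : finType) (e : rel T) (p q : nat)
  (cv : T -> nat) (ce : T -> T -> nat) : Prop :=
  [/\ (forall x, cv x < p),
      (forall x y, e x y -> ce x y < p /\ ce x y = ce y x),
      (forall x y, e x y -> pq_ok p q (cv x) (cv y)),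
      (forall x y, e x y -> pq_ok p q (cv x) (ce x y))
    &
      (forall x y z, e x y -> e x z -> y != z -> pq_ok p q (ce x y) (ce x z))].

Definition has_total_colouring (T : finType) (e : rel T) (p q : nat) : Prop :=
  exists cv ce, @is_total_colouring T e p q cv ce.

Definition circ_total_chi (R : realType) (T : finType) (e : rel T) : R :=
  inf [set x : R | exists p q : nat,
         [/\ (1 <= q)%N, (q <= p)%N, x = (p%:R / q%:R)%R & has_total_colouring e p q]].

(* Vertices: [None] is the vertex u of B_0; [Some (i, inl a)] is the vertex a
   of the k-vertex side A of block B_{i+1} (the side carrying the half-edges),
   [Some (i, inr b)] is the vertex b of the (k-1)-vertex side of B_{i+1}.
   In B_{i+1} the kept half-edge f_{i+1} is at A-vertex 0 and f'_{i+1} at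
   A-vertex 1.  Joining f_i with f'_{i+1}:
     u -- (block 1, A1);  (block i, A0) -- (block i+1, A1);  (block n, A0) -- u. *)
Definition gvert (k n : nat) : finType := option ('I_n * ('I_k + 'I_k.-1)).

Definition gadj0 (k n : nat) (x y : gvert k n) : bool :=
  match x, y with
  | Some (i, inl a), Some (j, inr _) => i == j
  | Some (i, inl a), Some (j, inl b) =>
      [&& val a == 0%N, val b == 1%N & (val i).+1 == val j]
  | None, Some (j, inl b) =>
      ((val b == 1%N) && (val j == 0%N)) || ((val b == 0%N) && ((val j).+1 == n))
  | _, _ => false
  end.

Definition gadj (k n : nat) : rel (gvert k n) :=
  fun x y => gadj0 x y || gadj0 y x.

(* Main.v *)
Require Import Defs.
From HB Require Import structures.
From mathcomp Require Import all_boot all_order all_algebra.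
From mathcomp Require Import all_classical all_reals all_analysis.
Import Order.TTheory GRing.Theory Num.Theory.
Import numFieldNormedType.Exports.
From mathcomp Require Import zify.
Set Implicit Arguments. Unset Strict Implicit. Unset Printing Implicit Defensive.

Lemma pq_ok_sym p q a b : pq_ok p q a b -> pq_ok p q b a.
Proof. rewrite /pq_ok /cdist; lia. Qed.

Lemma sepmod p q X Y d : 0 < p -> X = Y + d -> q <= d -> d <= p - q ->
  pq_ok p q (X %% p) (Y %% p).
Proof.
move=> p0 -> hq hd; rewrite -modnDml.
have hy := ltn_pmod Y p0; set y := Y %% p in hy *.
case: (ltnP (y + d) p) => h.
  rewrite modn_small //; rewrite /pq_ok /cdist; lia.
have -> : y + d = (y + d - p) + p by lia.
rewrite modnDr modn_small; last by lia.
rewrite /pq_ok /cdist; lia.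
Qed.

Lemma sepmod' p q X Y d : 0 < p -> X = Y + d -> q <= d -> d <= p - q ->
  pq_ok p q (Y %% p) (X %% p).
Proof. move=> p0 e hq hd; apply: pq_ok_sym; exact: (sepmod p0 e hq hd). Qed.

Lemma block_ok k q c c' i : c <= k -> c' <= k -> c != c' -> 0 < q ->
  pq_ok (k.+1 * q + 1) q ((c * q + i) %% (k.+1 * q + 1)) ((c' * q + i) %% (k.+1 * q + 1)).
Proof.
move=> hc hc' ne q0.
case: (ltngtP c c') => h; last by rewrite h eqxx in ne.
  apply: (sepmod' (d := (c' - c) * q)); [lia| |nia|nia].
  rewrite mulnBl; have : c * q <= c' * q by rewrite leq_mul2r ltnW ?orbT.
  lia.
apply: (sepmod (d := (c - c') * q)); [lia| |nia|nia].
rewrite mulnBl; have : c' * q <= c * q by rewrite leq_mul2r ltnW ?orbT.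
lia.
Qed.

Lemma pack p q m (f : 'I_m -> nat) : 0 < q -> 1 < m -> (forall i, f i < p) ->
  (forall i j, i != j -> pq_ok p q (f i) (f j)) -> m * q <= p.
Proof.
move=> q0 m1 fp fok.
have p0 : 0 < p by have := fp (Ordinal (ltnW m1)); lia.
pose g (x : 'I_m * 'I_q) : 'I_p := Ordinal (ltn_pmod (f x.1 + x.2) p0).
have ginj : injective g.
  move=> [i t] [j t'] /(congr1 val) /= e.
  have ht := ltn_ord t; have ht' := ltn_ord t'.
  case: (eqVneq i j) => [eij|nij].
    subst j; move: e; move/eqP; rewrite eqn_modDl => /eqP e.
    have hp : q <= p.
      have := fok (Ordinal (ltnW m1)) (Ordinal m1) isT; rewrite /pq_ok /cdist; lia.
    rewrite !modn_small in e; try lia.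
    by congr pair; apply: val_inj.
  exfalso; have := fok _ _ nij; have := fp i; have := fp j.
  move: e; set a := f i; set b := f j => e hb ha.
  case: (ltngtP a b) => hab; rewrite /pq_ok /cdist => hok.
  - move: e; rewrite (modn_small (m := a + t)); last lia.
    case: (ltnP (b + t') p) => hb'.
      rewrite modn_small //; lia.
    have -> : b + t' = (b + t' - p) + p by lia.
    rewrite modnDr modn_small; lia.
  - move: e; rewrite (modn_small (m := b + t')); last lia.
    case: (ltnP (a + t) p) => ha'.
      rewrite modn_small //; lia.
    have -> : a + t = (a + t - p) + p by lia.
    rewrite modnDr modn_small; lia.
  - lia.
have := leq_card g ginj; rewrite card_prod !card_ord //.
Qed.
Inductive adjI (k n : nat) : gvert k n -> gvert k n -> Prop :=
| AB (i : 'I_n) (a : 'I_k) (b : 'I_k.-1) : adjI (Some (i, inl a)) (Some (i, inr b))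
| BA (i : 'I_n) (a : 'I_k) (b : 'I_k.-1) : adjI (Some (i, inr b)) (Some (i, inl a))
| JF (i j : 'I_n) (a a' : 'I_k) : nat_of_ord a = 0 -> nat_of_ord a' = 1 -> (nat_of_ord i).+1 = nat_of_ord j ->
    adjI (Some (i, inl a)) (Some (j, inl a'))
| JB (i j : 'I_n) (a a' : 'I_k) : nat_of_ord a = 0 -> nat_of_ord a' = 1 -> (nat_of_ord i).+1 = nat_of_ord j ->
    adjI (Some (j, inl a')) (Some (i, inl a))
| U1 (j : 'I_n) (b : 'I_k) : nat_of_ord j = 0 -> nat_of_ord b = 1 -> adjI None (Some (j, inl b))
| U1' (j : 'I_n) (b : 'I_k) : nat_of_ord j = 0 -> nat_of_ord b = 1 -> adjI (Some (j, inl b)) None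
| U2 (j : 'I_n) (b : 'I_k) : nat_of_ord b = 0 -> (nat_of_ord j).+1 = n -> adjI None (Some (j, inl b))
| U2' (j : 'I_n) (b : 'I_k) : nat_of_ord b = 0 -> (nat_of_ord j).+1 = n -> adjI (Some (j, inl b)) None.

Lemma gadjP k n (x y : gvert k n) : gadj x y -> adjI x y.
Proof.
rewrite /gadj.
case: x => [[i [a|b]]|]; case: y => [[j [a'|b']]|] //=; rewrite ?orbF.
- case/orP => /and3P [/eqP h1 /eqP h2 /eqP h3].
    exact: JF.
  exact: JB.
- by move/eqP => <-; apply: AB.
- case/orP => [/andP [/eqP h1 /eqP h2]|/andP [/eqP h1 /eqP h2]].
    exact: U1'.
  exact: U2'.
- by move/eqP => <-; apply: BA.
- case/orP => [/andP [/eqP h1 /eqP h2]|/andP [/eqP h1 /eqP h2]].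
    exact: U1.
  exact: U2.
Qed.

Lemma q_facts n : 3 <= n -> [/\ 0 < (n.-1)./2, 2 * (n.-1)./2 <= n.-1 & n.-1 <= 2 * (n.-1)./2 + 1].
Proof.
move=> hn; have := odd_double_half n.-1; rewrite -muln2.
case: (odd n.-1) => /= h1; split; lia.
Qed.

Section Col.
Variables (k n q : nat).
Hypotheses (hk : 2 <= k) (hn : 3 <= n) (hq0 : 0 < q) (hq1 : 2 * q <= n.-1) (hq2 : n.-1 <= 2 * q + 1).
Notation p := (k.+1 * q + 1).

Definition cvf (x : gvert k n) : nat :=
  match x with
  | None => q
  | Some (i, inl a) => a.+1 * q + i
  | Some (i, inr _) => 0 * q + i
  end.

Definition ecol (a : 'I_k) (b : 'I_k.-1) : nat := 1 + (a + b + 1) %% k.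

Definition cef (x y : gvert k n) : nat :=
  match x, y with
  | None, Some (j, inl b) => if (val j == 0) && (val b == 1) then 0 else n.-1
  | Some (j, inl b), None => if (val j == 0) && (val b == 1) then 0 else n.-1
  | Some (i, inl a), Some (_, inr b) => ecol a b * q + i
  | Some (_, inr b), Some (i, inl a) => ecol a b * q + i
  | Some (i, inl _), Some (j, inl _) => minn i j
  | _, _ => 0
  end.

Lemma cef_sym x y : cef x y = cef y x.
Proof. by case: x => [[i [a|b]]|]; case: y => [[j [a'|b']]|] //=; rewrite minnC. Qed.

Lemma ecol_bound a b : 1 <= ecol a b <= k.
Proof. rewrite /ecol; have := ltn_pmod (a + b + 1) (ltnW hk); lia. Qed.

Lemma ecol_ne_vert (a : 'I_k) (b : 'I_k.-1) : ecol a b != a.+1.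
Proof.
rewrite /ecol add1n eqSS; apply/negP => /eqP h.
have hb := ltn_ord b; have ha := ltn_ord a.
have : (a + (b + 1)) = a + 0 %[mod k] by rewrite addnA h addn0 modn_small.
move/eqP; rewrite eqn_modDl mod0n modn_small; lia.
Qed.

Lemma ecol_inj_b (a : 'I_k) (b b' : 'I_k.-1) : b != b' -> ecol a b != ecol a b'.
Proof.
move=> ne; rewrite /ecol eqn_add2l -!addnA eqn_modDl !modn_small.
- by rewrite eqn_add2r.
- have := ltn_ord b'; lia.
- have := ltn_ord b; lia.
Qed.

Lemma ecol_inj_a (a a' : 'I_k) (b : 'I_k.-1) : a != a' -> ecol a b != ecol a' b.
Proof.
move=> ne; rewrite /ecol eqn_add2l.
have -> : a + b + 1 = (b + 1) + a by lia.
have -> : a' + b + 1 = (b + 1) + a' by lia.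
by rewrite eqn_modDl !modn_small.
Qed.

Lemma ecolq a b : q <= ecol a b * q <= k * q.
Proof.
have /andP [h1 h2] := ecol_bound a b.
rewrite -{1}(mul1n q) !leq_mul2r h1 h2; by rewrite !orbT.
Qed.

Lemma kq2 : 2 * q <= k * q.
Proof. by rewrite leq_mul2r hk orbT. Qed.

Ltac sepT := match goal with |- pq_ok _ _ (?X %% _) (?Y %% _) =>
  first [ apply: (sepmod (d := X - Y)); [lia|lia|lia|lia]
        | apply: (sepmod' (d := Y - X)); [lia|lia|lia|lia] ] end.

Definition cv (x : gvert k n) := cvf x %% p.
Definition ce (x y : gvert k n) := cef x y %% p.

Lemma vv x y : adjI x y -> pq_ok p q (cv x) (cv y).
Proof.
have := kq2; rewrite /cv => hkq.
case=> /=.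
- move=> i a b; apply: block_ok => //; lia.
- move=> i a b; apply: block_ok => //; lia.
all: intros; repeat match goal with H : nat_of_ord _ = _ |- _ => rewrite H; clear H end; sepT.
Qed.

Lemma ve x y : adjI x y -> pq_ok p q (cv x) (ce x y).
Proof.
have := kq2; rewrite /cv /ce => hkq.
case=> /=.
- move=> i a b; apply: block_ok => //; last (by rewrite eq_sym ecol_ne_vert);
  have := ecolq a b; have := ecol_bound a b; lia.
- move=> i a b; apply: block_ok => //; have := ecol_bound a b; lia.
all: intros; repeat match goal with H : nat_of_ord _ = _ |- _ => rewrite H; clear H end;
  rewrite /= ?andbF /=; sepT.
Qed.

Lemma ee x y z : adjI x y -> adjI x z -> y != z -> pq_ok p q (ce x y) (ce x z).
Proof.
have := kq2; rewrite /ce => hkq.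
case=> [i a b|i a b|i j a a' ha ha' hij|i j a a' ha ha' hij|j b hj hb|j b hj hb|j b hj hb|j b hj hb] h2;
  inversion h2; subst => /=.
all: move=> ne; try by rewrite eqxx in ne.
all: try (apply: block_ok => //; [have := ecol_bound a b; lia | | apply: ecol_inj_b; apply: contra ne => /eqP -> //]; 
  have := ecol_bound a b0; lia).
all: try (apply: block_ok => //; [have := ecol_bound a b; lia | | apply: ecol_inj_a; apply: contra ne => /eqP -> //]; 
  have := ecol_bound a0 b; lia).
all: try (exfalso; move/eqP: ne; apply; congr (Some (_, inl _)); apply: ord_inj; lia).

all: repeat match goal with o : 'I_n |- _ => lazymatch goal with _ : is_true (nat_of_ord o < n) |- _ => fail | _ => have := ltn_ord o; intro end end.
all: try (exfalso; lia);
  repeat match goal with H : nat_of_ord _ = _ |- _ => rewrite H; clear H end;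
  rewrite /= ?andbF /=;
  repeat match goal with |- context [ecol ?a ?b] => 
    match goal with _ : is_true (q <= ecol a b * q <= k * q) |- _ => fail 1 | _ => have := ecolq a b; move=> ? end end;
  try sepT.
Qed.

Lemma colouring : has_total_colouring (@gadj k n) p q.
Proof.
exists cv, ce; split.
- by move=> x; rewrite /cv ltn_pmod // addn1.
- by move=> x y _; split; [rewrite /ce ltn_pmod // addn1 | rewrite /ce cef_sym].
- by move=> x y /gadjP; apply: vv.
- by move=> x y /gadjP; apply: ve.
- by move=> x y z /gadjP h1 /gadjP h2; apply: ee.
Qed.
End Col.

Lemma lower k n p q : 2 <= k -> 0 < n -> 0 < q -> has_total_colouring (@gadj k n) p q ->
  k.+1 * q <= p.
Proof.
move=> hk hn hq [cv [ce [h1 h2 h3 h4 h5]]].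
have hk1 : 0 < k.-1 by lia.
pose i0 : 'I_n := Ordinal hn.
pose b0 : 'I_k.-1 := Ordinal hk1.
pose bv : gvert k n := Some (i0, inr b0).
have edge : forall a : 'I_k, gadj bv (Some (i0, inl a)).
  by move=> a; rewrite /gadj /= eqxx.
pose f (t : 'I_k.+1) := if unlift ord0 t is Some a then ce bv (Some (i0, inl a)) else cv bv.
apply: (@pack p q k.+1 f) => //; first by lia.
- move=> t; rewrite /f; case: (unliftP ord0 t) => [a _|_] //.
  by case: (h2 _ _ (edge a)).
- move=> t t'; rewrite /f.
  case: (unliftP ord0 t) => [a ->|->]; case: (unliftP ord0 t') => [a' ->|->] ne.
  + apply: h5; try exact: edge.
    apply: contraNneq ne => -[->]; done.
  + by apply: pq_ok_sym; apply: h4.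
  + by apply: h4.
  + by rewrite eqxx in ne.
Qed.

Unset Implicit Arguments.
Local Open Scope classical_set_scope.
Local Open Scope ring_scope.

Lemma chi_bounds (R : realType) (k n : nat) : (2 <= k)%N -> (3 <= n)%N ->
  (k.+1)%:R <= circ_total_chi R (@gadj k n) /\
  circ_total_chi R (@gadj k n) <= (k.+1)%:R + ((n.-1)./2)%:R^-1.
Proof.
move=> hk hn.
have [hq0 hq1 hq2] := q_facts hn.
set q := (n.-1)./2 in hq0 hq1 hq2 *.
have hcol := colouring hk hn hq0 hq1 hq2.
have qR : (0 : R) < q%:R by rewrite ltr0n.
have mem : [set x : R | exists p q : nat,
         [/\ (1 <= q)%N, (q <= p)%N, x = (p%:R / q%:R)%R & has_total_colouring (@gadj k n) p q]]
   ((k.+1)%:R + q%:R^-1).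
  exists (k.+1 * q + 1)%N, q; split => //; first by nia.
  by rewrite natrD natrM mulrDl mul1r -mulrA (divff (lt0r_neq0 qR)) mulr1.
rewrite /circ_total_chi; split.
  apply: lb_le_inf; first by exists ((k.+1)%:R + q%:R^-1).
  move=> x [p [q' [hq1' hqp -> hc]]].
  have := lower hk (ltnW (ltnW hn)) hq1' hc.
  by rewrite ler_pdivlMr ?ltr0n // -natrM ler_nat.
apply: ge_inf => //.
exists 0 => x [p [q' [_ _ -> _]]].
by apply: divr_ge0; apply: ler0n.
Qed.

From mathcomp Require Import lra.

Theorem corollary5 (R : realType) (k : nat) (hk : (2 <= k)%N) :
  (fun n : nat => circ_total_chi R (@gadj k n)) @ \oo --> ((k.+1)%:R : R).
Proof.
apply/cvgrPdist_le => eps eps0.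
have hM := truncnS_gt (eps^-1).
set M := Num.Def.trunc (eps^-1) in hM.
exists (2 * M + 5)%N => // n /= hn.
have hn3 : (3 <= n)%N by lia.
have [h1 h2] := chi_bounds R k n hk hn3.
have [hq0 hq1 hq2] := q_facts hn3.
set q := (n.-1)./2 in hq0 hq1 hq2 h2.
have hMq : (M.+1 <= q)%N by lia.
have hqe : q%:R^-1 <= eps.
  have qR : (0 : R) < q%:R by rewrite ltr0n.
  rewrite -[eps]invrK lef_pV2 ?posrE ?invr_gt0 ?ltr0n //.
  apply: le_trans (ltW hM) _; by rewrite ler_nat.
rewrite ler_norml; apply/andP; split; lra.
Qed.
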